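(* Let $c_0=(x_0,y_0,z_0)=(-0.2794,\,0.2451,\,0.36)\in\mathbb R^3$ and let $L=B(c_0,1)\cap B(-c_0,1)\subseteq\mathbb R^3$. Then $S_{e_3}(L)\notin\mathcal S_3$. More precisely, let $w=(0.4154,\,0.7262)$ and define, near $w$, \[ f_d(x,y)=-z_0+\sqrt{1-(x-x_0)^2-(y-y_0)^2},\qquad g_u(x,y)=-z_0+\sqrt{1-(x+x_0)^2-(y+y_0)^2}, \] and $h=(f_d+g_u)/2$. Then $w\in P_{e_3}(L)$, $L\cap((w,0)+\mathbb Re_3)=\{(w,z): -f_d(w)\le z\le g_u(w)\}$, the boundary of $S_{e_3}(L)$ near the points $(w,\pm h(w))$ is given by the graphs of $\pm h$, and the sectional curvature of this boundary at $(w,h(w))$ (and at $(w,-h(w))$) in direction $e_1$, \[ \kappa_h(w,e_1)=\frac{|(\nabla^2h(w))_{1,1}|}{\sqrt{1+\|\nabla h(w)\|^2}\,\bigl(1+\langle e_1,\nabla h(w)\rangle^2\bigr)}, \] is strictly smaller than $1$.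
   Context: For $c\in\mathbb R^3$, $B(c,1)$ is the closed Euclidean unit ball centered at $c$. $\mathcal S_3$ is the class of all intersections of families of closed Euclidean unit balls in $\mathbb R^3$; a set in $\mathcal S_3$ with smooth boundary has all sectional curvatures at least $1$ at every boundary point. $P_{e_3}$ is orthogonal projection onto $e_3^\perp\cong\mathbb R^2$. For a compact convex set $K$ and $u\in S^{2}$, for each $x\in P_{u^\perp}(K)$ write $K\cap(x+\mathbb Ru)=[x+a(x)u,x+b(x)u]$; the Steiner symmetral is $S_u(K)=\{x+yu: x\in P_{u^\perp}(K),\ |y|\le |b(x)-a(x)|/2\}$. *)

(* Defs.v *)
From Stdlib Require Import Reals.
From Coquelicot Require Import Coquelicot.
Open Scope R_scope.

Definition pt3 := (R * R * R)%type.

Definition unit_ball (c : pt3) (p : pt3) : Prop :=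
  let '(c1, c2, c3) := c in let '(p1, p2, p3) := p in
  (p1 - c1)^2 + (p2 - c2)^2 + (p3 - c3)^2 <= 1.

Definition in_S3 (K : pt3 -> Prop) : Prop :=
  exists C : pt3 -> Prop, forall p, K p <-> (forall c, C c -> unit_ball c p).

Definition proj_e3 (K : pt3 -> Prop) (x y : R) : Prop := exists z, K (x, y, z).

(* Steiner symmetral in direction e3: over (x,y) in P(K), the fiber
   K ∩ ((x,y,0)+R e3) = [(x,y,a),(x,y,b)] and the symmetral keeps |t| <= (b-a)/2. *)
Definition steiner_e3 (K : pt3 -> Prop) (p : pt3) : Prop :=
  let '(x, y, t) := p in
  exists a b, K (x, y, a) /\ K (x, y, b) /\
    (forall z, K (x, y, z) -> a <= z <= b) /\ Rabs t <= Rabs (b - a) / 2.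

Definition x0 : R := -2794 / 10000.
Definition y0 : R := 2451 / 10000.
Definition z0 : R := 36 / 100.
Definition c0 : pt3 := (x0, y0, z0).
Definition mc0 : pt3 := (- x0, - y0, - z0).

Definition L (p : pt3) : Prop := unit_ball c0 p /\ unit_ball mc0 p.

Definition wx : R := 4154 / 10000.
Definition wy : R := 7262 / 10000.

Definition f_d (x y : R) : R := - z0 + sqrt (1 - (x - x0)^2 - (y - y0)^2).
Definition g_u (x y : R) : R := - z0 + sqrt (1 - (x + x0)^2 - (y + y0)^2).
Definition h (x y : R) : R := (f_d x y + g_u x y) / 2.

Definition h_1 : R := Derive (fun s => h s wy) wx.
Definition h_2 : R := Derive (fun s => h wx s) wy.
Definition h_11 : R := Derive (fun s => Derive (fun t => h t wy) s) wx.

Definition kappa_h_w_e1 : R :=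
  Rabs h_11 / (sqrt (1 + (h_1^2 + h_2^2)) * (1 + h_1^2)).

(* Main.v *)
Require Import Defs.
From Stdlib Require Import Reals Lra Psatz.
From Coquelicot Require Import Coquelicot.
Open Scope R_scope.

Lemma sqrt_lb a X : 0 <= a -> a * a <= X -> a <= sqrt X.
Proof.
intros Ha H. assert (HX : 0 <= X) by nra.
pose proof (sqrt_pos X). pose proof (sqrt_sqrt X HX). nra.
Qed.

Lemma sqrt_ub a X : 0 <= a -> X <= a * a -> sqrt X <= a.
Proof.
intros Ha H. destruct (Rle_dec 0 X) as [HX|HX].
- pose proof (sqrt_pos X). pose proof (sqrt_sqrt X HX). nra.
- rewrite sqrt_neg_0 by lra. lra.
Qed.

Lemma fiber x y sa sb : 0 <= sa -> 0 <= sb ->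
  sa * sa = 1 - (x - x0)^2 - (y - y0)^2 ->
  sb * sb = 1 - (x + x0)^2 - (y + y0)^2 ->
  sa - sb <= 2 * z0 -> sb - sa <= 2 * z0 ->
  forall z, L (x, y, z) <-> z0 - sa <= z <= - z0 + sb.
Proof.
intros Ha Hb HA HB H1 H2 z. unfold L, unit_ball, c0, mc0.
split.
- intros [P Q]. split; nra.
- intros [P Q]. unfold z0 in *. split; nra.
Qed.

Lemma steiner_iff x y sa sb : 0 <= sa -> 0 <= sb ->
  sa * sa = 1 - (x - x0)^2 - (y - y0)^2 ->
  sb * sb = 1 - (x + x0)^2 - (y + y0)^2 ->
  sa - sb <= 2 * z0 -> sb - sa <= 2 * z0 ->
  forall z, steiner_e3 L (x, y, z) <-> Rabs z <= (- z0 + sa + (- z0 + sb)) / 2.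
Proof.
intros Ha Hb HA HB H1 H2 z.
pose proof (fiber x y sa sb Ha Hb HA HB H1 H2) as F.
unfold steiner_e3. split.
- intros (a & b & La & Lb & _ & Ht).
  apply F in La. apply F in Lb.
  revert Ht. unfold Rabs. destruct (Rcase_abs z); destruct (Rcase_abs (b - a)); lra.
- intros Hz. exists (z0 - sa), (-z0 + sb).
  assert (Hz' : 0 <= (- z0 + sa + (- z0 + sb)) / 2) by (pose proof (Rabs_pos z); lra).
  split; [apply F; lra|]. split; [apply F; lra|]. split.
  + intros w Hw. apply F in Hw. lra.
  + rewrite (Rabs_right (-z0 + sb - (z0 - sa))) by lra. lra.
Qed.

Definition SA x y := sqrt (1 - (x - x0)^2 - (y - y0)^2).
Definition SB x y := sqrt (1 - (x + x0)^2 - (y + y0)^2).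

Lemma near_conds x y : (x - wx)^2 + (y - wy)^2 < (1/100)^2 ->
  0 <= SA x y /\ 0 <= SB x y /\
  SA x y * SA x y = 1 - (x - x0)^2 - (y - y0)^2 /\
  SB x y * SB x y = 1 - (x + x0)^2 - (y + y0)^2 /\
  SA x y - SB x y <= 2 * z0 /\ SB x y - SA x y <= 2 * z0.
Proof.
intros H.
assert (Hx : -1/100 < x - wx < 1/100).
{ pose proof (pow2_ge_0 (y - wy)). simpl in *. split; nra. }
assert (Hy : -1/100 < y - wy < 1/100).
{ pose proof (pow2_ge_0 (x - wx)). simpl in *. split; nra. }
unfold wx, wy, x0, y0, z0 in *.
assert (A0 : 0 <= 1 - (x - -2794/10000)^2 - (y - 2451/10000)^2) by nra.
assert (A1 : 1 - (x - -2794/10000)^2 - (y - 2451/10000)^2 <= 6/10 * (6/10)) by nra.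
assert (B0 : 0 <= 1 - (x + -2794/10000)^2 - (y + 2451/10000)^2) by nra.
assert (B1 : 1 - (x + -2794/10000)^2 - (y + 2451/10000)^2 <= 5/10 * (5/10)) by nra.
unfold SA, SB, x0, y0, z0.
pose proof (sqrt_pos (1 - (x - -2794/10000)^2 - (y - 2451/10000)^2)).
pose proof (sqrt_pos (1 - (x + -2794/10000)^2 - (y + 2451/10000)^2)).
pose proof (sqrt_ub (6/10) _ ltac:(lra) A1).
pose proof (sqrt_ub (5/10) _ ltac:(lra) B1).
repeat split; try lra; apply sqrt_sqrt; lra.
Qed.

Lemma part4 : forall x y z, (x - wx)^2 + (y - wy)^2 < (1/100)^2 ->
       (steiner_e3 L (x, y, z) <-> Rabs z <= h x y).
Proof.
intros x y z H. destruct (near_conds x y H) as (a & b & c & d & e & f).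
rewrite (steiner_iff x y _ _ a b c d e f z). unfold h, f_d, g_u. fold (SA x y) (SB x y).
reflexivity.
Qed.
Definition Aw s := 1 - (s - x0)^2 - (wy - y0)^2.
Definition Bw s := 1 - (s + x0)^2 - (wy + y0)^2.
Definition D1 s := (-(s - x0)/sqrt(Aw s) - (s+x0)/sqrt(Bw s))/2.
Definition D2 s := (- / sqrt (Aw s) - (s - x0)^2 / (sqrt (Aw s))^3
                    - / sqrt (Bw s) - (s + x0)^2 / (sqrt (Bw s))^3) / 2.

Lemma dh1 s : 0 < Aw s -> 0 < Bw s -> is_derive (fun t => h t wy) s (D1 s).
Proof.
intros HA HB. unfold h, f_d, g_u, D1.
auto_derive.
- unfold Aw, Bw in *. split; [lra|split; [lra|exact I]].
- fold (Aw s) (Bw s).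
  replace (1 + - ((s + - x0) * ((s + - x0) * 1)) + - ((wy - y0) * ((wy - y0) * 1)))
    with (Aw s) by (unfold Aw; ring).
  replace (1 + - ((s + x0) * ((s + x0) * 1)) + - ((wy + y0) * ((wy + y0) * 1)))
    with (Bw s) by (unfold Bw; ring).
  assert (sqrt (Aw s) <> 0) by (apply Rgt_not_eq, sqrt_lt_R0; lra).
  assert (sqrt (Bw s) <> 0) by (apply Rgt_not_eq, sqrt_lt_R0; lra).
  field; auto.
Qed.

Lemma dD1 s : 0 < Aw s -> 0 < Bw s -> is_derive D1 s (D2 s).
Proof.
intros HA HB. unfold D1, D2. unfold Aw at 1 2 3, Bw at 1 2 3.
assert (sqrt (Aw s) <> 0) by (apply Rgt_not_eq, sqrt_lt_R0; lra).
assert (sqrt (Bw s) <> 0) by (apply Rgt_not_eq, sqrt_lt_R0; lra).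
auto_derive;
  (replace (1 + - ((s + - x0) * ((s + - x0) * 1)) + - ((wy - y0) * ((wy - y0) * 1)))
    with (Aw s) by (unfold Aw; ring));
  (replace (1 + - ((s + x0) * ((s + x0) * 1)) + - ((wy + y0) * ((wy + y0) * 1)))
    with (Bw s) by (unfold Bw; ring)); fold (Aw s) (Bw s).
- repeat split; auto; lra.
- field; auto.
Qed.

Lemma Aw_pos s : Rabs (s - wx) < 1/100 -> 0 < Aw s /\ 0 < Bw s.
Proof.
intros H. apply Rabs_def2 in H. unfold Aw, Bw, wx, wy, x0, y0 in *. split; nra.
Qed.

Lemma h1_val : h_1 = D1 wx.
Proof.
unfold h_1. apply is_derive_unique. apply dh1; apply Aw_pos; rewrite Rminus_diag, Rabs_R0; lra.
Qed.

Lemma h11_val : h_11 = D2 wx.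
Proof.
unfold h_11. apply is_derive_unique.
assert (P : 0 < 1/100) by lra.
apply (is_derive_ext_loc D1).
- exists (mkposreal _ P). intros t Ht. simpl in Ht.
  destruct (Aw_pos t Ht) as [HA HB].
  symmetry. apply is_derive_unique. apply dh1; auto.
- apply dD1; apply Aw_pos; rewrite Rminus_diag, Rabs_R0; lra.
Qed.

Lemma h2_val : h_2 = (-(wy - y0)/sqrt(Aw wx) - (wy+y0)/sqrt(Bw wx))/2.
Proof.
unfold h_2. apply is_derive_unique.
assert (HA : 0 < Aw wx) by (apply Aw_pos; rewrite Rminus_diag, Rabs_R0; lra).
assert (HB : 0 < Bw wx) by (apply Aw_pos; rewrite Rminus_diag, Rabs_R0; lra).
unfold h, f_d, g_u.
auto_derive.
- unfold Aw, Bw in *. split; [lra|split; [lra|exact I]].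
- replace (1 - (wx - x0) * ((wx - x0) * 1) + - ((wy + - y0) * ((wy + - y0) * 1)))
    with (Aw wx) by (unfold Aw; ring).
  replace (1 - (wx + x0) * ((wx + x0) * 1) + - ((wy + y0) * ((wy + y0) * 1)))
    with (Bw wx) by (unfold Bw; ring).
  assert (sqrt (Aw wx) <> 0) by (apply Rgt_not_eq, sqrt_lt_R0; lra).
  assert (sqrt (Bw wx) <> 0) by (apply Rgt_not_eq, sqrt_lt_R0; lra).
  field; auto.
Qed.

Lemma div_lt1 a b : 0 < b -> a < b -> a / b < 1.
Proof.
intros Hb H. unfold Rdiv. replace 1 with (b * / b) by (field; lra).
apply Rmult_lt_compat_r; [apply Rinv_0_lt_compat|]; lra.
Qed.

Lemma kappa_lt1 : kappa_h_w_e1 < 1.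
Proof.
unfold kappa_h_w_e1. rewrite h11_val, h1_val, h2_val. unfold D2, D1.
assert (HA : 0 < Aw wx) by (apply Aw_pos; rewrite Rminus_diag, Rabs_R0; lra).
assert (HB : 0 < Bw wx) by (apply Aw_pos; rewrite Rminus_diag, Rabs_R0; lra).
assert (A1 : 53459/100000 <= sqrt (Aw wx)).
{ apply sqrt_lb; [lra|]. unfold Aw, wx, wy, x0, y0. lra. }
assert (A2 : sqrt (Aw wx) <= 53460/100000).
{ apply sqrt_ub; [lra|]. unfold Aw, wx, wy, x0, y0. lra. }
assert (B1 : 19514/100000 <= sqrt (Bw wx)).
{ apply sqrt_lb; [lra|]. unfold Bw, wx, wy, x0, y0. lra. }
assert (B2 : sqrt (Bw wx) <= 19515/100000).
{ apply sqrt_ub; [lra|]. unfold Bw, wx, wy, x0, y0. lra. }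
set (sa := sqrt (Aw wx)) in *. set (sb := sqrt (Bw wx)) in *.
assert (Ea : / sa * sa = 1) by (field; lra).
assert (Eb : / sb * sb = 1) by (field; lra).
assert (Pa : 0 < / sa) by (apply Rinv_0_lt_compat; lra).
assert (Pb : 0 < / sb) by (apply Rinv_0_lt_compat; lra).
set (ia := / sa) in *. set (ib := / sb) in *.
assert (Ia : 100000/53460 <= ia <= 100000/53459) by (split; nra).
assert (Ib : 100000/19515 <= ib <= 100000/19514) by (split; nra).
assert (E11 : (- ia - (wx - x0) ^ 2 / sa ^ 3 - ib - (wx + x0) ^ 2 / sb ^ 3) / 2
   = (- ia - (6948/10000)^2 * ia^3 - ib - (136/1000)^2 * ib^3) / 2).
{ unfold ia, ib, wx, x0. field. lra. }
assert (E1 : (- (wx - x0) / sa - (wx + x0) / sb) / 2 = (- (6948/10000) * ia - (136/1000) * ib) / 2).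
{ unfold ia, ib, wx, x0. field. lra. }
assert (E2 : (- (wy - y0) / sa - (wy + y0) / sb) / 2 = (- (4811/10000) * ia - (9713/10000) * ib) / 2).
{ unfold ia, ib, wy, y0. field. lra. }
rewrite E11, E1, E2.
assert (Ca : ia ^ 3 <= (100000/53459)^3) by (apply pow_incr; lra).
assert (Cb : ib ^ 3 <= (100000/19514)^3) by (apply pow_incr; lra).
assert (Ca0 : 0 <= ia ^ 3) by (apply pow_le; lra).
assert (Cb0 : 0 <= ib ^ 3) by (apply pow_le; lra).
set (V := (- ia - (6948/10000)^2 * ia^3 - ib - (136/1000)^2 * ib^3) / 2).
assert (HV : Rabs V <= 6323/1000).
{ rewrite Rabs_left1 by (unfold V; lra). unfold V. lra. }
set (g1 := (- (6948/10000) * ia - (136/1000) * ib) / 2).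
set (g2 := (- (4811/10000) * ia - (9713/10000) * ib) / 2).
assert (G1 : g1 <= - 998/1000) by (unfold g1; lra).
assert (G2 : g2 <= - 2938/1000) by (unfold g2; lra).
assert (Q1 : (998/1000)^2 <= g1^2) by nra.
assert (Q2 : (2938/1000)^2 <= g2^2) by nra.
assert (S1 : 325/100 <= sqrt (1 + (g1^2 + g2^2))) by (apply sqrt_lb; lra).
apply div_lt1; nra.
Qed.

Definition p1 := 1049102191/2500000000. Definition p2 := 7261841731/10000000000. Definition p3 := 6258141/10000000000.
Definition q1 := 4111483597/10000000000. Definition q2 := 7261841417/10000000000. Definition q3 := 4551927/500000000.
Definition r1 := 1038500281/2500000000. Definition r2 := 726200331/1000000000. Definition r3 := 24351689/5000000000.
Definition kk := 8973239071/500000000000000.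

Lemma spindle c1 c2 c3 :
  (p1 - c1)^2 + (p2 - c2)^2 + (p3 - c3)^2 <= 1 ->
  (q1 - c1)^2 + (q2 - c2)^2 + (q3 - c3)^2 <= 1 ->
  (r1 - c1)^2 + (r2 - c2)^2 + (r3 - c3)^2 <= 1.
Proof.
intros Hp Hq.
pose (m1 := (p1 + q1)/2). pose (m2 := (p2 + q2)/2). pose (m3 := (p3 + q3)/2).
assert (H : 0 <= (kk*(c1 - m1) + (r1 - m1))^2 + (kk*(c2 - m2) + (r2 - m2))^2 + (kk*(c3 - m3) + (r3 - m3))^2).
{ pose proof (pow2_ge_0 (kk*(c1 - m1) + (r1 - m1))).
  pose proof (pow2_ge_0 (kk*(c2 - m2) + (r2 - m2))).
  pose proof (pow2_ge_0 (kk*(c3 - m3) + (r3 - m3))). lra. }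
unfold m1, m2, m3, p1, p2, p3, q1, q2, q3, r1, r2, r3, kk in *.
lra.
Qed.

Lemma dist_ok x y : (x - wx)^2 + (y - wy)^2 < (1/100)^2 -> (x - wx)^2 + (y - wy)^2 < (1/100)^2.
Proof. auto. Qed.

Theorem theorem4p4 :
  ~ in_S3 (steiner_e3 L) /\
  proj_e3 L wx wy /\
  (forall z, L (wx, wy, z) <-> - f_d wx wy <= z <= g_u wx wy) /\
  (exists delta, 0 < delta /\
     forall x y z, (x - wx)^2 + (y - wy)^2 < delta^2 ->
       (steiner_e3 L (x, y, z) <-> Rabs z <= h x y)) /\
  kappa_h_w_e1 < 1.
Proof.
assert (Nw : (wx - wx)^2 + (wy - wy)^2 < (1/100)^2) by (unfold wx, wy; lra).
destruct (near_conds wx wy Nw) as (a & b & c & d & e & f).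
assert (SAw : 53459/100000 <= SA wx wy).
{ apply sqrt_lb; [lra|]. unfold wx, wy, x0, y0. lra. }
assert (SBw : 19514/100000 <= SB wx wy).
{ apply sqrt_lb; [lra|]. unfold wx, wy, x0, y0. lra. }
split; [|split; [|split; [|split]]].
- intros [C HC].
  assert (Sp : steiner_e3 L (p1, p2, p3)).
  { rewrite part4 by (unfold p1, p2, wx, wy; lra).
    rewrite Rabs_right by (unfold p3; lra).
    unfold h, f_d, g_u.
    assert (529055641/1000000000 <= sqrt (1 - (p1 - x0) ^ 2 - (p2 - y0) ^ 2))
      by (apply sqrt_lb; [lra|]; unfold p1, p2, x0, y0; lra).
    assert (24024581/125000000 <= sqrt (1 - (p1 + x0) ^ 2 - (p2 + y0) ^ 2))
      by (apply sqrt_lb; [lra|]; unfold p1, p2, x0, y0; lra).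
    unfold p3, z0; lra. }
  assert (Sq : steiner_e3 L (q1, q2, q3)).
  { rewrite part4 by (unfold q1, q2, wx, wy; lra).
    rewrite Rabs_right by (unfold q3; lra).
    unfold h, f_d, g_u.
    assert (540093521/1000000000 <= sqrt (1 - (q1 - x0) ^ 2 - (q2 - y0) ^ 2))
      by (apply sqrt_lb; [lra|]; unfold q1, q2, x0, y0; lra).
    assert (198114829/1000000000 <= sqrt (1 - (q1 + x0) ^ 2 - (q2 + y0) ^ 2))
      by (apply sqrt_lb; [lra|]; unfold q1, q2, x0, y0; lra).
    unfold q3, z0; lra. }
  pose proof (proj1 (HC (p1,p2,p3)) Sp) as Sp0. pose proof (proj1 (HC (q1,q2,q3)) Sq) as Sq0. clear Sp Sq.
  assert (Sr : steiner_e3 L (r1, r2, r3)).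
  { apply (proj2 (HC (r1,r2,r3))). intros [[c1 c2] c3] Hc.
    pose proof (Sp0 _ Hc) as Sp. pose proof (Sq0 _ Hc) as Sq.
    unfold unit_ball in *. apply spindle; assumption. }
  rewrite part4 in Sr by (unfold r1, r2, wx, wy; lra).
  rewrite Rabs_right in Sr by (unfold r3; lra).
  unfold h, f_d, g_u in Sr.
  assert (sqrt (1 - (r1 - x0) ^ 2 - (r2 - y0) ^ 2) <= 267299119/500000000)
    by (apply sqrt_ub; [lra|]; unfold r1, r2, x0, y0; lra).
  assert (sqrt (1 - (r1 + x0) ^ 2 - (r2 + y0) ^ 2) <= 48785011/250000000)
    by (apply sqrt_ub; [lra|]; unfold r1, r2, x0, y0; lra).
  unfold r3, z0 in *; lra.
- exists (z0 - SA wx wy). apply (fiber wx wy _ _ a b c d e f). unfold z0 in *; lra.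
- intros z. rewrite (fiber wx wy _ _ a b c d e f z). unfold f_d, g_u. fold (SA wx wy) (SB wx wy).
  split; intros; lra.
- exists (1/100). split; [lra|]. exact part4.
- exact kappa_lt1.
Qed.
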